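(* Let $G$ be a group and $\mathcal{S}$ a 2-complex with vertices in $G$ such that $\mathcal{C}=Sc[\mathcal{S},G]$ is a commutative triplet structure. For every vertex $v\in G\times\mathcal{T}$, the map $E$ restricts to a bijection from the neighbor set $\Gamma_{G_{zig}}(v)$ onto the neighbor set $\Gamma_{G_{walk}(\mathcal{C})}(E(v))$.
   Context: For a 2-complex $X$, $X(1)$ is the set of 2-sets in triangles; $G_{walk}(X)$ is the graph on $X(1)$ with distinct edges adjacent iff they lie in a common triangle. For $\sigma\subseteq G$, $\sigma\cdot g=\{sg:s\in\sigma\}$; $Sc[\mathcal{S},G]=\{\sigma\cdot g\}$. $\mathcal{T}=\mathcal{S}(1)$, $\mathcal{T}_o$ = ordered pairs $(t_1,t_2)$ with $\{t_1,t_2\}\in\mathcal{T}$. Commutative triplet structure: (0) $\{s,s^{-1}\}\notin\mathcal{T}$ for every vertex $s$; (A) every edge of $\mathcal{T}$ lies in exactly $\tilde d$ triangles of $\mathcal{S}$; (B) $ab=ba$ for $\{a,b\}\in\mathcal{T}$; (C) $\{a,b\}\in\mathcal{T}\iff\{a^{-1},b^{-1}\}\in\mathcal{T}$; (D) for $t\ne t'\in\mathcal{T}_o$, $t_1t_2^{-1}=t'_1(t'_2)^{-1}$ implies $t'_2=t_1^{-1}$, $t'_1=t_2^{-1}$; (E) the 1-skeleton of $\mathcal{S}$ is connected. For $\tau=\{a,b\}$: $E(g,\tau)=\{ag,bg\}$, $\hat\tau g=abg$, $\tau^{-1}=\{a^{-1},b^{-1}\}$. $L=G_{walk}(\mathcal{S})$.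 On $G\times\mathcal{T}$, red edges join $(g,\tau)$ and $(g,\tau')$ when $\tau\sim\tau'$ in $L$; the blue edge joins $(g,\tau)$ and $(\hat\tau g,\tau^{-1})$. $G_{zig}$ is the graph on $G\times\mathcal{T}$ induced by the operator $\tfrac12P_R+\tfrac12P_RP_B$ ($P_R,P_B$ the normalized red/blue adjacency matrices): the neighbors of $v$ are its red neighbors and the red neighbors of its blue neighbor. *)

(* Defs.v *)
From HB Require Import structures.
From mathcomp Require Import all_boot.
From mathcomp Require Import finmap.
From Stdlib Require Import Relations.

Set Implicit Arguments.
Unset Strict Implicit.
Unset Printing Implicit Defensive.

Local Open Scope fset_scope.
Local Open Scope group_scope.

Section Defs.
Variable G : groupType.

(* A (pure) 2-complex with vertices in G, given by its finite set of
   triangles; every triangle is a 3-subset of G. *)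
Definition is_2complex (S : {fset {fset G}}) : Prop :=
  forall t, t \in S -> #|` t| = 3.

Definition edges_of (X : {fset G} -> Prop) (e : {fset G}) : Prop :=
  #|` e| = 2 /\ exists t, X t /\ e `<=` t.

Definition walk_adj (X : {fset G} -> Prop) (e e' : {fset G}) : Prop :=
  [/\ edges_of X e, edges_of X e', e <> e' &
      exists t, X t /\ e `|` e' `<=` t].

Definition trianglesS (S : {fset {fset G}}) : {fset G} -> Prop :=
  fun t => t \in S.

Definition TT (S : {fset {fset G}}) : {fset G} -> Prop := edges_of (trianglesS S).

Definition rtrans (sigma : {fset G}) (g : G) : {fset G} :=
  (fun s => s * g) @` sigma.

Definition Sc (S : {fset {fset G}}) : {fset G} -> Prop :=
  fun t => exists sigma g, sigma \in S /\ t = rtrans sigma g.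

Definition edge_inv (tau : {fset G}) : {fset G} := (fun x => x^-1) @` tau.

(* hat tau = a b, where tau = {a, b}  (with a, b listed in the enumeration
   order of the finite set; by (B) the order is irrelevant) *)
Definition edge_hat (tau : {fset G}) : G :=
  nth 1 (tau : seq G) 0 * nth 1 (tau : seq G) 1.

Definition Emap (v : G * {fset G}) : {fset G} := rtrans v.2 v.1.

(* Commutative triplet structure (conditions (0), (A)-(E)) *)
Definition comm_triplet_structure (S : {fset {fset G}}) : Prop :=
  [/\ (* (0) *) forall s : G, ~ TT S [fset s; s^-1],
      (* (A) *) exists dt : nat, forall e, TT S e ->
                  #|` [fset t in S | e `<=` t]| = dt,
      (* (B) *) forall a b : G, TT S [fset a; b] -> a * b = b * a,
      (* (C) *) forall a b : G, TT S [fset a; b] <-> TT S [fset a^-1; b^-1] &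
      (* (D) *) (forall t1 t2 u1 u2 : G,
                  TT S [fset t1; t2] -> TT S [fset u1; u2] ->
                  (t1, t2) <> (u1, u2) ->
                  t1 * t2^-1 = u1 * u2^-1 -> u2 = t1^-1 /\ u1 = t2^-1)]
  /\ (* (E) *) forall x y : G,
                  (exists t, t \in S /\ x \in t) -> (exists t, t \in S /\ y \in t) ->
                  clos_refl_trans G (fun a b => TT S [fset a; b]) x y.

Definition Ladj (S : {fset {fset G}}) : {fset G} -> {fset G} -> Prop :=
  walk_adj (trianglesS S).

(* neighbours of v = (g, tau) in G_zig: its red neighbours (g, tau') with
   tau ~ tau' in L, and the red neighbours (hat tau g, tau'') with
   tau'' ~ tau^{-1} in L of its blue neighbour (hat tau g, tau^{-1}). *)
Definition zig_nbr (S : {fset {fset G}}) (v w : G * {fset G}) : Prop :=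
  (w.1 = v.1 /\ Ladj S v.2 w.2) \/
  (w.1 = edge_hat v.2 * v.1 /\ Ladj S (edge_inv v.2) w.2).

End Defs.

(* Main.v *)
Require Import Defs.
From HB Require Import structures.
From mathcomp Require Import all_boot.
From mathcomp Require Import finmap.
Set Implicit Arguments.
Unset Strict Implicit.
Unset Printing Implicit Defensive.
Local Open Scope fset_scope.
Local Open Scope group_scope.

Section H.
Variable G : groupType.
Implicit Types (s t : {fset G}) (g h a b c k x y : G).

Lemma mem_rtrans s g x : (x \in rtrans s g) = (x * g^-1 \in s).
Proof.
apply/imfsetP/idP => [[y ys ->]|xs]; first by rewrite mulgK.
by exists (x * g^-1) => //; rewrite mulgVK.
Qed.

Lemma rtransM s g h : rtrans (rtrans s g) h = rtrans s (g * h).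
Proof. by apply/fsetP => x; rewrite !mem_rtrans invgM mulgA. Qed.

Lemma rtrans1 s : rtrans s 1 = s.
Proof. by apply/fsetP => x; rewrite mem_rtrans invg1 mulg1. Qed.

Lemma rtransK s g : rtrans (rtrans s g) g^-1 = s.
Proof. by rewrite rtransM mulgV rtrans1. Qed.

Lemma rtrans_inj s s' g : rtrans s g = rtrans s' g -> s = s'.
Proof. by move=> E; rewrite -(rtransK s g) E rtransK. Qed.

Lemma rtrans_sub s t g : (rtrans s g `<=` rtrans t g) = (s `<=` t).
Proof.
apply/fsubsetP/fsubsetP => H x.
  by move=> xs; have := H (x * g); rewrite !mem_rtrans mulgK; apply.
by rewrite !mem_rtrans; apply: H.
Qed.

Lemma rtransU s t g : rtrans (s `|` t) g = rtrans s g `|` rtrans t g.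
Proof. by apply/fsetP => x; rewrite in_fsetU !mem_rtrans in_fsetU. Qed.

Lemma rtrans2 a b g : rtrans [fset a; b] g = [fset a * g; b * g].
Proof.
apply/fsetP => x; rewrite mem_rtrans !in_fset2.
by rewrite !divg_eq.
Qed.

Lemma card_rtrans s g : #|` rtrans s g| = #|` s|.
Proof. apply/eqP/card_in_imfsetP => x y _ _; exact: mulIg. Qed.

Lemma sub_untrans (x : {fset G}) s h : x `<=` rtrans s h -> rtrans x h^-1 `<=` s.
Proof. by rewrite -(rtrans_sub _ _ h^-1) rtransK. Qed.

Lemma card2 (e : {fset G}) : #|` e| = 2 -> exists a b : G, a != b /\ e = [fset a; b].
Proof.
move=> He.
have : e != fset0 by rewrite -cardfs_eq0 He.
case/fset0Pn => a ae.
have := cardfsD1 a e; rewrite ae He add1n => -[] /esym /eqP /cardfs1P [b Eb].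
exists a, b; split.
  have : b \in e `\ a by rewrite Eb fset11.
  by rewrite in_fsetD1 eq_sym => /andP[].
by rewrite -Eb fsetD1K.
Qed.

Lemma mem_edge_inv s x : (x \in edge_inv s) = (x^-1 \in s).
Proof.
apply/imfsetP/idP => [[y ys ->]|xs]; first by rewrite invgK.
by exists x^-1 => //; rewrite invgK.
Qed.

Lemma einv2 a b : edge_inv [fset a; b] = [fset a^-1; b^-1].
Proof. by apply/fsetP => x; rewrite mem_edge_inv !in_fset2 !eqg_invLR. Qed.

Lemma ehat_inv a b : a * b = b * a -> rtrans [fset a; b] (a * b)^-1 = [fset a^-1; b^-1].
Proof.
move=> C.
have e1 : a * (a * b)^-1 = b^-1 by rewrite C invgM mulgA mulgV mul1g.
have e2 : b * (a * b)^-1 = a^-1 by rewrite invgM mulgA mulgV mul1g.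
by rewrite rtrans2 e1 e2 fsetUC.
Qed.

Lemma ehat_inv' a b : a * b = b * a -> rtrans [fset a^-1; b^-1] (a * b) = [fset a; b].
Proof. by move=> C; rewrite -ehat_inv // rtransM mulVg rtrans1. Qed.

Lemma edge_hat2 a b : a != b -> a * b = b * a -> edge_hat [fset a; b] = a * b.
Proof.
move=> ab C; rewrite /edge_hat.
have Ha : a \in enum_fset [fset a; b] := fset21 a b.
have Hb : b \in enum_fset [fset a; b] := fset22 a b.
have sz : size (enum_fset [fset a; b]) = 2 by rewrite cardfs2 ab.
have U := fset_uniq [fset a; b].
move: Ha Hb sz U; case: (enum_fset _) => [|x [|y [|]]] //= Ha Hb _.
rewrite !inE in Ha Hb *.
case/orP: Ha => /eqP Ha; case/orP: Hb => /eqP Hb; subst => //.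
- by rewrite eqxx in ab.
- by rewrite eqxx in ab.
Qed.


Lemma sub_card_eq (A B : {fset G}) : A `<=` B -> (#|` B| <= #|` A|)%N -> A = B.
Proof. by move=> sAB le; apply/eqP; rewrite eqEfcard sAB le. Qed.

Lemma keyK S
  (HD : forall t1 t2 u1 u2 : G,
                  TT S [fset t1; t2] -> TT S [fset u1; u2] ->
                  (t1, t2) <> (u1, u2) ->
                  t1 * t2^-1 = u1 * u2^-1 -> u2 = t1^-1 /\ u1 = t2^-1)
  a b k : TT S [fset a; b] -> TT S [fset a * k; b * k] -> k = 1 \/ k = (b * a)^-1.
Proof.
move=> E1 E2; case: (eqVneq k 1) => [->|nk]; [by left | right].
have neq : (a * k, b * k) <> (a, b).
  case=> /(f_equal (fun z => a^-1 * z)); rewrite mulKg mulVg => Ek.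
  by move: nk; rewrite Ek eqxx.
have eq : (a * k) * (b * k)^-1 = a * b^-1 by rewrite invgM mulgA mulgK.
have [Eb _] := HD (a * k) (b * k) a b E2 E1 neq eq.
have -> : k = a^-1 * (a * k) by rewrite mulKg.
by rewrite -[a * k]invgK -Eb invgM.
Qed.

Lemma edges_rtrans S e g : TT S e -> edges_of (Sc S) (rtrans e g).
Proof.
case=> ce [t [tS et]]; split; first by rewrite card_rtrans.
exists (rtrans t g); split; [by exists t, g | by rewrite rtrans_sub].
Qed.

Lemma adj_rtrans S e e' g : Ladj S e e' -> walk_adj (Sc S) (rtrans e g) (rtrans e' g).
Proof.
case=> E1 E2 ne [t [tS et]]; split; try exact: edges_rtrans.
  by move/rtrans_inj.
exists (rtrans t g); split; [by exists t, g | by rewrite -rtransU rtrans_sub].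
Qed.

Lemma adj_untrans S (x y : {fset G}) (sg : {fset G}) h : sg \in S ->
  #|` x| = 2 -> #|` y| = 2 -> x <> y -> x `|` y `<=` rtrans sg h ->
  Ladj S (rtrans x h^-1) (rtrans y h^-1).
Proof.
move=> sS cx cy nxy sub; have /fsubUsetP [sx sy] := sub; split.
- split; first by rewrite card_rtrans.
  by exists sg; split => //; apply: sub_untrans.
- split; first by rewrite card_rtrans.
  by exists sg; split => //; apply: sub_untrans.
- by move/rtrans_inj.
- by exists sg; split => //; rewrite -rtransU; apply: sub_untrans.
Qed.

Lemma no_mix S (HS : is_2complex S)
  (H0 : forall s : G, ~ TT S [fset s; s^-1])
  (HB : forall a b : G, TT S [fset a; b] -> a * b = b * a)
  (HD : forall t1 t2 u1 u2 : G,
                  TT S [fset t1; t2] -> TT S [fset u1; u2] ->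
                  (t1, t2) <> (u1, u2) ->
                  t1 * t2^-1 = u1 * u2^-1 -> u2 = t1^-1 /\ u1 = t2^-1)
  a b (t1 t2 : {fset G}) : a != b -> TT S [fset a; b] ->
  Ladj S [fset a; b] t1 -> Ladj S [fset a^-1; b^-1] t2 -> t1 = rtrans t2 (a * b) -> False.
Proof.
move=> ab Hab L1 L2 E.
have C := HB a b Hab.
case: L1 => _ [c1 _] ne1 [t [tS sub1]].
case: L2 => _ _ _ [t' [t'S sub2]].
have sub3 : [fset a; b] `|` t1 `<=` rtrans t' (a * b).
  by rewrite E -(ehat_inv' C) -rtransU rtrans_sub.
have ct : #|` t| = 3 := HS t tS.
have ct' : #|` t'| = 3 := HS t' t'S.
have card3 : #|` [fset a; b] `|` t1| = 3.
  apply/eqP; rewrite eqn_leq -{1}ct fsubset_leq_card //=.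
  rewrite ltnNge; apply/negP => le2.
  have E1 : [fset a; b] = [fset a; b] `|` t1.
    by apply: sub_card_eq; [exact: fsubsetUl | rewrite cardfs2 ab].
  have s1 : t1 `<=` [fset a; b] by rewrite E1 fsubsetUr.
  apply: ne1; apply/esym/sub_card_eq => //; rewrite cardfs2 ab c1.
  done.
have Et : [fset a; b] `|` t1 = t by apply: sub_card_eq => //; rewrite ct card3.
have Et' : [fset a; b] `|` t1 = rtrans t' (a * b).
  by apply: sub_card_eq => //; rewrite card_rtrans ct' card3.
have Ht' : t' = rtrans t (a * b)^-1 by rewrite -Et Et' rtransK.
have : ~~ (t `<=` [fset a; b]).
  by apply/negP => /fsubset_leq_card; rewrite ct cardfs2 ab.
case/fsubsetPn => c ct_ cnot.
have at_ : a \in t by rewrite -Et in_fsetU fset21.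
have ac : a != c by apply: contraNneq cnot => <-; rewrite fset21.
have subac : [fset a; c] `<=` t.
  by apply/fsubsetP => x; rewrite in_fset2 => /orP[] /eqP ->.
have Eac : TT S [fset a; c].
  by split; [rewrite cardfs2 ac | exists t].
have Eac' : TT S [fset a * (a * b)^-1; c * (a * b)^-1].
  rewrite -rtrans2; split; first by rewrite card_rtrans cardfs2 ac.
  by exists t'; split => //; rewrite Ht' rtrans_sub.
case: (keyK HD Eac Eac') => Ek.
  have : a * b = 1 by rewrite -[a * b]invgK Ek invg1.
  move/mulg1_eq => Eb; apply: (H0 a); by rewrite Eb.
have := f_equal (fun z => z^-1) Ek; rewrite !invgK -(HB a c Eac) => /mulgI Ebc.
by move: cnot; rewrite -Ebc fset22.
Qed.

End H.

Theorem mainTheorem9 (G : groupType) (S : {fset {fset G}})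
  (HS : is_2complex S) (HC : comm_triplet_structure S)
  (v : G * {fset G}) (Hv : TT S v.2) :
  [/\ (forall w, zig_nbr S v w -> walk_adj (Sc S) (Emap v) (Emap w)),
      (forall w w', zig_nbr S v w -> zig_nbr S v w' -> Emap w = Emap w' -> w = w') &
      (forall e, walk_adj (Sc S) (Emap v) e -> exists w, zig_nbr S v w /\ Emap w = e)].
Proof.
case: HC => [[H0 _ HB HCc HD] _].
case: v Hv => g tau /= Hv.
have [a [b [ab Etau]]] := card2 Hv.1; subst tau.
have C := HB a b Hv.
have hat := edge_hat2 ab C.
split.
- case=> w1 t1 [[/= -> L] | [/= -> L]]; rewrite /Emap /=.
    exact: adj_rtrans.
  rewrite hat -{1}(ehat_inv' C) rtransM; apply: adj_rtrans.
  by rewrite einv2 in L.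
- case=> w1 t1 [w1' t2]; rewrite /zig_nbr /Emap /= => Z1 Z2 E.
  case: Z1 => [[E1 L1]|[E1 L1]]; case: Z2 => [[E2 L2]|[E2 L2]];
    subst w1 w1'; rewrite ?hat ?einv2 in E L1 L2 *.
  + by rewrite (rtrans_inj E).
  + exfalso; rewrite -rtransM in E.
    exact: (no_mix HS H0 HB HD ab Hv L1 L2 (rtrans_inj E)).
  + exfalso; rewrite -rtransM in E.
    exact: (no_mix HS H0 HB HD ab Hv L2 L1 (rtrans_inj (esym E))).
  + by rewrite (rtrans_inj E).
- move=> e [_ Ee ne [T' [[sg [h [sgS ET]]] sub]]]; subst T'.
  rewrite /Emap /= in sub ne.
  have sub1 : rtrans [fset a; b] (g * h^-1) `<=` sg.
    rewrite -rtransM; apply: sub_untrans.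
    by case/fsubUsetP: sub.
  have Ek : TT S [fset a * (g * h^-1); b * (g * h^-1)].
    rewrite -rtrans2; split; first by rewrite card_rtrans; exact: Hv.1.
    by exists sg.
  have Eh : h = (g * h^-1)^-1 * g by rewrite invgM invgK mulgVK.
  have Ladj0 := adj_untrans sgS (etrans (card_rtrans _ _) Hv.1) Ee.1 ne sub.
  rewrite rtransM in Ladj0.
  case: (keyK HD Hv Ek) => Ek'.
  + rewrite Ek' invg1 mul1g in Eh; subst h.
    exists (g, rtrans e g^-1); split; last by rewrite /Emap /= rtransM mulVg rtrans1.
    left; split => //=.
    by rewrite Ek' rtrans1 in Ladj0.
  + exists (h, rtrans e h^-1); split; last by rewrite /Emap /= rtransM mulVg rtrans1.
    right; split => /=.
      by rewrite hat {1}Eh Ek' invgK C.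
    by rewrite Ek' -C ehat_inv // einv2 in Ladj0 *.
Qed.
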